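(* Let $n\ge2$, let $Q$ be a symmetric $n\times n$ matrix with entries in $[0,1]$ and zero diagonal, and let $A=\mathrm{Bern}(Q)$. Then $\mathbb E[\|A-Q\|_\square]\le16\sqrt{\rho(Q)/n}$, and if $n\rho(Q)\ge1$, then with probability at least $1-e^{-n}$, $\|A-Q\|_\square\le15\sqrt{\rho(Q)/n}$.
   Context: $\mathrm{Bern}(Q)$ is the random symmetric $\{0,1\}$-matrix with $A_{ij}=A_{ji}=1$ with probability $Q_{ij}$ independently for $i<j$ and $A_{ii}=0$. For an $n\times n$ matrix $H$: $\rho(H)=\frac1{n^2}\sum_{i,j}H_{ij}$ and $\|H\|_\square=\max_{S,T\subseteq[n]}\frac1{n^2}|\sum_{(i,j)\in S\times T}H_{ij}|$. *)

(* Defs.v *)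
From HB Require Import structures.
From mathcomp Require Import all_boot all_order all_algebra.
From mathcomp Require Import reals sequences exp.
Set Implicit Arguments. Unset Strict Implicit. Unset Printing Implicit Defensive.
Import Order.TTheory GRing.Theory Num.Theory.
Local Open Scope ring_scope.

Section Defs.
Variables (R : realType) (n : nat).

Definition rho (H : 'M[R]_n) : R :=
  (n%:R ^+ 2)^-1 * \sum_(i < n) \sum_(j < n) H i j.

Definition cut_norm (H : 'M[R]_n) : R :=
  \big[Num.max/0]_(S : {set 'I_n})
    \big[Num.max/0]_(T : {set 'I_n})
      ((n%:R ^+ 2)^-1 * `|\sum_(i in S) \sum_(j in T) H i j|).

(* Sample space: a boolean for every ordered pair; only the coordinates
   (i,j) with i < j are random (independent Bernoulli(Q_ij)); all other
   coordinates are forced to be false (weight 0 otherwise). *)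
Definition omega := {ffun 'I_n * 'I_n -> bool}.

Definition bern_weight (Q : 'M[R]_n) (w : omega) : R :=
  \prod_(p : 'I_n * 'I_n)
    (if (p.1 < p.2)%N then (if w p then Q p.1 p.2 else 1 - Q p.1 p.2)
     else (if w p then 0 else 1)).

Definition bern_mx (w : omega) : 'M[R]_n :=
  \matrix_(i, j)
    (if (i < j)%N then (w (i, j))%:R
     else if (j < i)%N then (w (j, i))%:R else 0).

Definition bern_E (Q : 'M[R]_n) (X : 'M[R]_n -> R) : R :=
  \sum_(w : omega) bern_weight Q w * X (bern_mx w).

Definition bern_P (Q : 'M[R]_n) (E : 'M[R]_n -> bool) : R :=
  \sum_(w : omega | E (bern_mx w)) bern_weight Q w.

End Defs.

(* Main.v *)
Require Import Defs.
From HB Require Import structures.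
From mathcomp Require Import all_boot all_order all_algebra.
From mathcomp Require Import reals sequences exp ring lra.
Import Order.TTheory GRing.Theory Num.Theory.
Local Open Scope ring_scope.

Section Aux.
Variable R : realType.

Lemma exp_quad (s : R) : s <= 1/2 -> expR s <= 1 + s + 2 * s ^+ 2.
Proof.
move=> hs.
have hm : expR s * expR (- s) = 1 by rewrite -expRD subrr expR0.
case: (lerP 0 s) => hs0.
- have h1 := expR_ge1Dx (- s).
  have he : 0 <= expR s := expR_ge0 s.
  nra.
- have h1 := expR_ge1Dx (- s / 2).
  have h2 : expR (- s) = expR (- s / 2) ^+ 2.
    by rewrite expr2 -expRD; congr expR; field.
  have he : 0 <= expR s := expR_ge0 s.
  have he2 : 0 <= expR (- s / 2) := expR_ge0 _.
  have h3 : (1 - s / 2) ^+ 2 <= expR (- s) by rewrite h2; rewrite -!/(_ ^+ 2); nra.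
  nra.
Qed.

Lemma coord_bound (q s : R) : 0 <= q <= 1 -> -(1/2) <= s <= 1/2 ->
  (1 - q) * expR (s * (0 - q)) + q * expR (s * (1 - q)) <= expR (2 * q * s ^+ 2).
Proof.
move=> /andP[q0 q1] /andP[s0 s1].
have e1 : expR (s * (1 - q)) = expR s * expR (s * (0 - q)).
  by rewrite -expRD; congr expR; ring.
rewrite e1.
have hq := @exp_quad s s1.
have h2 := expR_ge1Dx (q * s + 2 * q * s ^+ 2).
have e2 : expR (2 * q * s ^+ 2) = expR (s * (0 - q)) * expR (q * s + 2 * q * s ^+ 2).
  by rewrite -expRD; congr expR; ring.
rewrite e2.
have he : 0 <= expR (s * (0 - q)) := expR_ge0 _.
have hes : 0 <= expR s := expR_ge0 _.
set E := expR (s * (0 - q)).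
have -> : (1 - q) * E + q * (expR s * E) = E * (1 - q + q * expR s) by ring.
apply: ler_wpM2l => //.
have : q * expR s <= q * (1 + s + 2 * s ^+ 2) by apply: ler_wpM2l.
nra.
Qed.

Lemma e52 : 8 <= expR (5/2 : R).
Proof.
have -> : (5/2 : R) = 1/4 * 10%:R by rewrite -[10%:R]/(10%:R); lra.
rewrite expRM_natr.
have h : 5/4 <= expR (1/4 : R) by have := expR_ge1Dx (1/4 : R); lra.
apply: le_trans (lerXn2r 10 _ _ h); last 2 first.
- by rewrite nnegrE; lra.
- by rewrite nnegrE expR_ge0.
rewrite !exprS expr0; lra.
Qed.

Lemma card_bound (m : nat) : (1 <= m)%N ->
  2 * ((2 ^ m) * (2 ^ m))%:R <= expR (5/2 * m%:R : R).
Proof.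
move=> m1.
have hn : (2 * (2 ^ m * 2 ^ m) <= 8 ^ m)%N.
  have -> : (8 ^ m = 2 ^ m * (2 ^ m * 2 ^ m))%N by rewrite -!expnMn.
  rewrite leq_mul2r; apply/orP; right; by rewrite -{1}(expn1 2) leq_exp2l.
have : (2 * (2 ^ m * 2 ^ m))%:R <= (8 ^ m)%:R :> R by rewrite ler_nat.
rewrite natrM natrX => h; apply: le_trans h _.
rewrite expRM_natr; apply: lerXn2r; rewrite ?nnegrE ?expR_ge0 //; last exact: e52.
Qed.
End Aux.

Section Main.
Variables (R : realType) (n : nat).
Local Notation P := ('I_n * 'I_n)%type.

Definition up (p : P) : bool := (p.1 < p.2)%N.
Definition wp (Q : 'M[R]_n) (p : P) (b : bool) : R :=
  if up p then (if b then Q p.1 p.2 else 1 - Q p.1 p.2) else (if b then 0 else 1).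

Lemma prodsum (g : P -> bool -> R) :
  \sum_(w : omega n) \prod_p g p (w p) = \prod_p \sum_b g p b.
Proof. by rewrite bigA_distr_bigA. Qed.

Lemma sum_wp Q p : \sum_b wp Q p b = 1.
Proof. rewrite big_bool /wp; case: ifP => _ /=. by rewrite addrC subrK. by rewrite add0r. Qed.

Lemma weight_sum (Q : 'M[R]_n) : \sum_(w : omega n) bern_weight Q w = 1.
Proof.
rewrite (eq_bigr (fun w : omega n => \prod_p wp Q p (w p))) // prodsum.
by rewrite big1 // => p _; rewrite sum_wp.
Qed.

Lemma weight_ge0 (Q : 'M[R]_n) w : (forall i j, 0 <= Q i j <= 1) -> 0 <= bern_weight Q w.
Proof.
move=> hr; apply: prodr_ge0 => p _.
have /andP[h0 h1] := hr p.1 p.2.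
by case: ifP; case: (w p) => //=; rewrite subr_ge0.
Qed.

Lemma sym_sum (F : 'I_n -> 'I_n -> R) : (forall i, F i i = 0) ->
  \sum_i \sum_j F i j = \sum_(p | up p) (F p.1 p.2 + F p.2 p.1).
Proof.
move=> hd.
rewrite pair_bigA /= (bigID up) /= big_split /=; congr (_ + _).
rewrite (bigID (fun p : P => p.1 == p.2)) /= big1; last first.
  by move=> p /andP[_ /eqP ->]; rewrite hd.
rewrite add0r (reindex_inj (h := fun p : P => (p.2, p.1))) /=; last first.
  by move=> [a b] [c d] [-> ->].
apply: eq_bigl => -[a b] /=; rewrite /up /=.
case: (ltngtP a b) => // hab; rewrite ?hab ?eqxx //=.
  by apply/negP => /eqP E; move: hab; rewrite E ltnn.
by apply/negbF/eqP/val_inj.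
Qed.


Variable (Q : 'M[R]_n).
Hypothesis hsym : Q^T = Q.
Hypothesis hrange : forall i j, 0 <= Q i j <= 1.
Hypothesis hdiag : forall i, Q i i = 0.

Definition X (S T : {set 'I_n}) (w : omega n) : R :=
  \sum_(i in S) \sum_(j in T) (bern_mx R w - Q) i j.
Definition cc (S T : {set 'I_n}) (p : P) : R :=
  ((p.1 \in S) && (p.2 \in T))%:R + ((p.2 \in S) && (p.1 \in T))%:R.

Lemma cc_bd S T p : 0 <= cc S T p <= 2.
Proof.
rewrite /cc; case: ((p.1 \in S) && (p.2 \in T)); case: ((p.2 \in S) && (p.1 \in T));
  apply/andP; split; rewrite /= ?mulr1n ?mulr0n; lra.
Qed.

Lemma qsym i j : Q i j = Q j i.
Proof. by rewrite -{1}hsym mxE. Qed.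

Lemma X_E S T w : X S T w = \sum_(p | up p) cc S T p * ((w p)%:R - Q p.1 p.2).
Proof.
have -> : X S T w = \sum_i \sum_j ((i \in S) && (j \in T))%:R * (bern_mx R w - Q) i j.
  rewrite /X big_mkcond; apply eq_bigr => i _; rewrite big_mkcond /=.
  case: (i \in S) => /=.
    by apply eq_bigr => j _; case: (j \in T) => /=; rewrite ?mul1r ?mul0r.
  by rewrite big1 // => j _; rewrite mul0r.
rewrite sym_sum; last by move=> i; rewrite !mxE ltnn hdiag subr0 mulr0.
apply eq_bigr => -[a b]; rewrite /up /= => hab.
have hba : (b < a)%N = false by rewrite ltnNge ltnW.
rewrite !mxE hab hba (qsym b a) /cc /=.
by rewrite mulrDl andbC.
Qed.

Lemma mgf S T (l : R) : -(1/4) <= l <= 1/4 ->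
  \sum_(w : omega n) bern_weight Q w * expR (l * X S T w)
    <= expR (8 * l ^+ 2 * \sum_(p | up p) Q p.1 p.2).
Proof.
move=> /andP[l0 l1].
pose h (p : P) (b : bool) := if up p then expR (l * (cc S T p * (b%:R - Q p.1 p.2))) else 1.
have E1 (w : omega n) : bern_weight Q w * expR (l * X S T w)
    = \prod_p (wp Q p (w p) * h p (w p)).
  rewrite big_split /=; congr (_ * _).

  rewrite X_E mulr_sumr (big_morph _ (@expRD R) (@expR0 R)) big_mkcond /=.
  by apply eq_bigr => p _; rewrite /h; case: ifP.
rewrite (eq_bigr _ (fun w _ => E1 w)) (prodsum (fun p b => wp Q p b * h p b)).
rewrite mulr_sumr (big_morph _ (@expRD R) (@expR0 R)) [X in _ <= X]big_mkcond /=.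

apply: ler_prod => p _.
rewrite big_bool /wp /h; case: ifP => hp /=; last first.
  by rewrite mul0r add0r mulr1 lexx ler01.
set q := Q p.1 p.2; set c := cc S T p.
have /andP[q0 q1] : 0 <= q <= 1 := hrange p.1 p.2.
have /andP[c0 c1] : 0 <= c <= 2 := cc_bd S T p.
have e0 : 0 <= expR (l * (c * (1%:R - q))) := expR_ge0 _.
have e1 : 0 <= expR (l * (c * (0%:R - q))) := expR_ge0 _.
apply/andP; split.
  by apply: addr_ge0; apply: mulr_ge0 => //; rewrite subr_ge0.
have hs : -(1/2) <= l * c <= 1/2.
  have h1 : 0 <= (l + 1/4) * c by apply: mulr_ge0; lra.
  have h2 : 0 <= (1/4 - l) * c by apply: mulr_ge0; lra.
  apply/andP; split; nra.
have hq : 0 <= q <= 1 by rewrite q0 q1.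
have := @coord_bound R q (l * c) hq hs.
rewrite !mulrA addrC => H; apply: (le_trans H).
rewrite ler_expR.
have : (l * c) ^+ 2 <= 4 * l ^+ 2.
  rewrite exprMn mulrC; apply: ler_wpM2r; first exact: sqr_ge0.
  rewrite expr2; nra.
nra.
Qed.

Lemma max_ind (K : R -> Prop) x y : K x -> K y -> K (Num.max x y).
Proof. by move=> hx hy; case: (leP x y). Qed.

Lemma sum_le_one {I : finType} (F : I -> R) (i0 : I) :
  (forall i, 0 <= F i) -> F i0 <= \sum_i F i.
Proof.
move=> h; rewrite (bigD1 i0) //= lerDl; apply: sumr_ge0 => i _; exact: h.
Qed.

Lemma cut_exp (H : 'M[R]_n) (l : R) : 0 <= l -> (0 < n)%N ->
  expR (l * n%:R ^+ 2 * cut_norm H) <=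
  \sum_(S : {set 'I_n}) \sum_(T : {set 'I_n})
     (expR (l * \sum_(i in S) \sum_(j in T) H i j) +
      expR (- l * \sum_(i in S) \sum_(j in T) H i j)).
Proof.
move=> l0 n0.
set Y := fun (S T : {set 'I_n}) => \sum_(i in S) \sum_(j in T) H i j.
set RHS := (X in _ <= X).
have eR : RHS = \sum_S \sum_T (expR (l * Y S T) + expR (- l * Y S T)) by [].
have ge0 : forall S T, 0 <= expR (l * Y S T) + expR (- l * Y S T).
  by move=> S T; apply: addr_ge0; apply: expR_ge0.
have Rge S T : expR (l * `|Y S T|) <= RHS.
  rewrite eR; apply: (le_trans _ (sum_le_one (fun S => \sum_T (expR (l * Y S T) + expR (- l * Y S T))) S _)); last first.
    by move=> S'; apply: sumr_ge0 => T' _; apply: ge0.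
  apply: (le_trans _ (sum_le_one (fun T => expR (l * Y S T) + expR (- l * Y S T)) T _)); last by move=> T'; apply: ge0.
  rewrite /=; case: (lerP 0 (Y S T)) => hY.
    by rewrite ger0_norm // lerDl expR_ge0.
  by rewrite ltr0_norm // mulrN -mulNr lerDr expR_ge0.
have N0 : (n%:R ^+ 2 : R) != 0 by rewrite expf_neq0 // pnatr_eq0 -lt0n.
rewrite /cut_norm.
apply: (@big_ind R (fun x => is_true (expR (l * n%:R ^+ 2 * x) <= RHS)) 0 Num.max).
- rewrite mulr0 expR0; apply: le_trans (Rge set0 set0).
  have := expR_ge1Dx (l * `|Y set0 set0|).
  have : 0 <= l * `|Y set0 set0| by apply: mulr_ge0.
  lra.
- by move=> x y hx hy /=; case: (leP x y).
move=> S _.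
apply: (@big_ind R (fun x => is_true (expR (l * n%:R ^+ 2 * x) <= RHS)) 0 Num.max).
- rewrite mulr0 expR0; apply: le_trans (Rge set0 set0).
  have := expR_ge1Dx (l * `|Y set0 set0|).
  have : 0 <= l * `|Y set0 set0| by apply: mulr_ge0.
  lra.
- by move=> x y hx hy /=; case: (leP x y).
move=> T _.
by rewrite mulrA -(mulrA l) mulfV // mulr1; apply: Rge.
Qed.

Lemma cut_triv (H : 'M[R]_n) :
  cut_norm H <= (n%:R ^+ 2)^-1 * \sum_i \sum_j `|H i j|.
Proof.
have hN : 0 <= (n%:R ^+ 2 : R)^-1 by rewrite invr_ge0 exprn_ge0.
have h0 : 0 <= (n%:R ^+ 2)^-1 * \sum_i \sum_j `|H i j|.
  by apply: mulr_ge0 => //; apply: sumr_ge0 => i _; apply: sumr_ge0.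
rewrite /cut_norm.
apply: (@big_ind R (fun x => is_true (x <= (n%:R ^+ 2)^-1 * \sum_i \sum_j `|H i j|)) 0 Num.max) => //; first by move=> x y hx hy /=; case: (leP x y).
move=> S _.
apply: (@big_ind R (fun x => is_true (x <= (n%:R ^+ 2)^-1 * \sum_i \sum_j `|H i j|)) 0 Num.max) => //; first by move=> x y hx hy /=; case: (leP x y).
move=> T _.
apply: ler_wpM2l => //.
apply: le_trans (ler_norm_sum _ _ _) _.
rewrite [X in X <= _]big_mkcond /=; apply: ler_sum => i _.
case: (i \in S); last by apply: sumr_ge0.
apply: le_trans (ler_norm_sum _ _ _) _.
rewrite [X in X <= _]big_mkcond /=; apply: ler_sum => j _.
by case: (j \in T).
Qed.

Local Notation W := (bern_weight (R:=R) Q).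

Lemma W_ge0 w : 0 <= W w.
Proof. exact: weight_ge0. Qed.

Lemma jensen (f : omega n -> R) (mu : R) :
  expR (mu * \sum_w W w * f w) <= \sum_w W w * expR (mu * f w).
Proof.
set m := \sum_w W w * f w; set E := expR (mu * m).
have eq : forall m' E', \sum_w W w * (E' * (1 + (mu * f w - mu * m')))
    = E' * \sum_w W w + E' * mu * \sum_w W w * f w - E' * mu * m' * \sum_w W w.
  move=> m' E'.
  rewrite !mulr_sumr -big_split -sumrB /=; apply eq_bigr => w _; ring.
have : \sum_w W w * (E * (1 + (mu * f w - mu * m))) <= \sum_w W w * expR (mu * f w).
  apply: ler_sum => w _; apply: ler_wpM2l; first exact: W_ge0.
  have -> : expR (mu * f w) = E * expR (mu * f w - mu * m).
    by rewrite /E -expRD; congr expR; ring.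
  apply: ler_wpM2l; first exact: expR_ge0.
  exact: expR_ge1Dx.
by rewrite eq weight_sum -/m !mulr1 addrK.
Qed.

Lemma markov (f : omega n -> R) (mu t : R) : 0 <= mu ->
  \sum_(w | ~~ (f w <= t)) W w <= \sum_w W w * expR (mu * (f w - t)).
Proof.
move=> mu0.
rewrite [X in _ <= X](bigID (fun w => f w <= t)) /=.
set A := (X in _ <= X + _).
have hA : 0 <= A.
  by apply: sumr_ge0 => w _; apply: mulr_ge0; [exact: W_ge0 | exact: expR_ge0].
suff : \sum_(w | ~~ (f w <= t)) W w <= \sum_(w | ~~ (f w <= t)) W w * expR (mu * (f w - t)) by lra.
apply: ler_sum => w hw.
rewrite -{1}(mulr1 (W w)); apply: ler_wpM2l; first exact: W_ge0.
have := expR_ge1Dx (mu * (f w - t)).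
have : 0 <= mu * (f w - t).
  by apply: mulr_ge0 => //; move: hw; rewrite -ltNge subr_ge0 => /ltW.
lra.
Qed.

Lemma P_compl (E : 'M[R]_n -> bool) :
  bern_P Q E = 1 - \sum_(w | ~~ E (bern_mx R w)) W w.
Proof.
move: (weight_sum Q); rewrite (bigID (fun w => E (bern_mx R w))) /= => h.
rewrite /bern_P; lra.
Qed.

Lemma marginal p0 : up p0 -> \sum_w W w * (w p0)%:R = Q p0.1 p0.2.
Proof.
move=> hp0.
pose g (p : P) (b : bool) := wp Q p b * (if p == p0 then b%:R else 1).
have E1 (w : omega n) : W w * (w p0)%:R = \prod_p g p (w p).
  rewrite /g big_split /=; congr (_ * _).
  by rewrite (bigD1 p0) //= eqxx big1 ?mulr1 // => p /negbTE ->.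
rewrite (eq_bigr _ (fun w _ => E1 w)) (prodsum g) (bigD1 p0) //= [X in _ * X]big1.
  by rewrite mulr1 /g eqxx big_bool /wp hp0 /= mulr1 mulr0 addr0.
by move=> p /negbTE hp; rewrite /g hp; under eq_bigr do rewrite mulr1; rewrite sum_wp.
Qed.

Hypothesis hn : (2 <= n)%N.

Definition U := \sum_(p | up p) Q p.1 p.2.

Lemma E_exp (l : R) : 0 <= l <= 1/4 ->
  \sum_w W w * expR (l * n%:R ^+ 2 * cut_norm (bern_mx R w - Q))
    <= expR (5/2 * n%:R) * expR (8 * l ^+ 2 * U).
Proof.
move=> /andP[l0 l1].
have n0 : (0 < n)%N by apply: leq_trans hn.
apply: le_trans (_ : \sum_w W w * \sum_(S : {set 'I_n}) \sum_(T : {set 'I_n})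
   (expR (l * X S T w) + expR (- l * X S T w)) <= _).
  apply: ler_sum => w _; apply: ler_wpM2l; first exact: W_ge0.
  exact: cut_exp.
have -> : \sum_w W w * \sum_(S : {set 'I_n}) \sum_(T : {set 'I_n})
   (expR (l * X S T w) + expR (- l * X S T w)) =
   \sum_(S : {set 'I_n}) \sum_(T : {set 'I_n})
   (\sum_w W w * expR (l * X S T w) + \sum_w W w * expR (- l * X S T w)).
  under eq_bigr do rewrite mulr_sumr.
  rewrite exchange_big /=; apply: eq_bigr => S _.
  under eq_bigr do rewrite mulr_sumr.
  rewrite exchange_big /=; apply: eq_bigr => T _.
  by rewrite -big_split /=; apply: eq_bigr => w _; rewrite mulrDr.
apply: le_trans (_ : \sum_(S : {set 'I_n}) \sum_(T : {set 'I_n})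
   (2 * expR (8 * l ^+ 2 * U)) <= _).
  apply: ler_sum => S _; apply: ler_sum => T _.
  rewrite mulr2n.
  have h1 := @mgf S T l.
  have h2 := @mgf S T (- l).
  rewrite sqrrN in h2.
  have : - (1/4) <= l <= 1/4 by apply/andP; split; lra.
  have : - (1/4) <= - l <= 1/4 by apply/andP; split; lra.
  move=> /h2 a /h1 b; rewrite /U; lra.
rewrite !sumr_const.
have hc : #|{set 'I_n}| = (2 ^ n)%N.
  by rewrite -cardsT -powersetT card_powerset cardsT card_ord.
have -> : forall x : R, x *+ #|{set 'I_n}| *+ #|{set 'I_n}|
    = x * ((2 ^ n) * (2 ^ n))%:R by move=> x; rewrite -mulrnA mulr_natr hc.
rewrite mulrAC; apply: ler_wpM2r; first exact: expR_ge0.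
exact: card_bound.
Qed.

Definition SQ := \sum_i \sum_j Q i j.

Lemma SQ_U : SQ = 2 * U.
Proof.
rewrite /SQ sym_sum // /U mulr_sumr; apply: eq_bigr => p _.
by rewrite (qsym p.2 p.1) mulr2n mulrDl mul1r.
Qed.

Lemma sumA (w : omega n) :
  \sum_i \sum_j (bern_mx R w) i j = \sum_(p | up p) 2 * (w p)%:R.
Proof.
rewrite sym_sum; last by move=> i; rewrite mxE ltnn.
apply: eq_bigr => -[a b]; rewrite /up /= => hab.
have hba : (b < a)%N = false by rewrite ltnNge ltnW.
by rewrite !mxE hab hba mulr2n mulrDl mul1r.
Qed.

Lemma E_triv : \sum_w W w * cut_norm (bern_mx R w - Q) <= 2 * rho Q.
Proof.
set c := (n%:R ^+ 2 : R)^-1.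
have c0 : 0 <= c by rewrite invr_ge0 exprn_ge0.
apply: le_trans (_ : \sum_w W w * (c * (\sum_(p | up p) 2 * (w p)%:R + SQ)) <= _).
  apply: ler_sum => w _; apply: ler_wpM2l; first exact: W_ge0.
  apply: le_trans (cut_triv _) _; apply: ler_wpM2l => //.
  rewrite -sumA /SQ -big_split; apply: ler_sum => i _.
  rewrite -big_split; apply: ler_sum => j _ /=.
  rewrite !mxE ler_norml.
  have /andP[q0 q1] := hrange i j.
  have a0 : 0 <= (if (i < j)%N then (w (i, j))%:R else if (j < i)%N then (w (j, i))%:R else 0 : R).
    by case: ifP => _; [ | case: ifP => _]; rewrite ?ler0n.
  have key : forall a b : R, 0 <= a -> 0 <= b -> - (a + b) <= a - b <= a + b.
    by move=> a b ha hb; apply/andP; split; lra.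
  exact: key.
have -> : \sum_w W w * (c * (\sum_(p | up p) 2 * (w p)%:R + SQ))
    = c * (\sum_w W w * \sum_(p | up p) 2 * (w p)%:R + SQ * \sum_w W w).
  rewrite [SQ * _]mulr_sumr mulrDr [c * (\sum_w _)]mulr_sumr [c * (\sum_w _)]mulr_sumr -big_split /=.
  by apply: eq_bigr => w _; ring.
rewrite weight_sum mulr1.
have -> : \sum_w W w * \sum_(p | up p) 2 * (w p)%:R = 2 * U.
  under eq_bigr do rewrite mulr_sumr.
  rewrite exchange_big /= /U mulr_sumr; apply: eq_bigr => p hp.
  rewrite -(marginal p hp) mulr_sumr; apply: eq_bigr => w _; ring.
by rewrite -SQ_U /rho -/c -/SQ; lra.
Qed.

Lemma basics :
  let a := n%:R : R in let r := Num.sqrt (rho Q / a) in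
  [/\ 2 <= a, 0 <= r, rho Q = a * r ^+ 2 & U = a ^+ 3 * r ^+ 2 / 2].
Proof.
move=> a r.
have a2 : 2 <= a by rewrite /a (ler_nat R 2 n).
have U0 : 0 <= U by apply: sumr_ge0 => p _; have /andP[] := hrange p.1 p.2.
have rhoE : rho Q = (a ^+ 2)^-1 * (2 * U) by rewrite /rho -SQ_U.
have rho0 : 0 <= rho Q.
  by rewrite rhoE; apply: mulr_ge0; [rewrite invr_ge0 exprn_ge0 // ; lra | lra].
have hr2 : r ^+ 2 = rho Q / a.
  by rewrite /r sqr_sqrtr // divr_ge0 //; lra.
have a0 : a != 0 by apply/eqP; lra.
have rE : rho Q = a * r ^+ 2 by rewrite hr2 mulrC divfK.
split => //; first exact: sqrtr_ge0.
have : (a ^+ 2)^-1 * (2 * U) = a * r ^+ 2 by rewrite -rhoE.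
move=> h; apply: (mulfI (_ : (a ^+ 2)^-1 * 2 != 0)).
  by rewrite mulf_neq0 // ?invr_eq0 ?expf_neq0 // pnatr_eq0.
rewrite mulrA in h; rewrite h; field; done.
Qed.

Lemma part1 : \sum_w W w * cut_norm (bern_mx R w - Q)
   <= 16 * Num.sqrt (rho Q / n%:R).
Proof.
have [a2 r0 rE UE] := basics.
set a := n%:R : R in a2 rE UE *.
set r := Num.sqrt (rho Q / a) in r0 rE UE *.
set EZ := \sum_w W w * cut_norm (bern_mx R w - Q).
case: (lerP (a * r) 4) => har.
  apply: le_trans E_triv _; rewrite rE.
  have : a * r ^+ 2 <= 4 * r by rewrite expr2 mulrA; nra.
  lra.
have rpos : 0 < r by nra.
set l := (a * r)^-1.
have l0 : 0 <= l <= 1/4.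
  have hl : l * (a * r) = 1 by rewrite /l mulVf //; apply/eqP; nra.
  apply/andP; split; first by rewrite /l invr_ge0; nra.
  nra.
have := jensen (fun w => cut_norm (bern_mx R w - Q)) (l * n%:R ^+ 2).
move=> /le_trans /(_ (E_exp l l0)).
rewrite -expRD ler_expR -/EZ -/a.
have e1 : l * a ^+ 2 * r = a by rewrite /l; field; apply/andP; split; apply/eqP; lra.
have e2 : 8 * l ^+ 2 * U = 4 * a by rewrite UE /l; field; apply/andP; split; apply/eqP; lra.
rewrite e2 => h.
have : l * a ^+ 2 * EZ * r <= (5 / 2 * a + 4 * a) * r by apply: ler_wpM2r; lra.
rewrite mulrAC e1 => h2.
have : EZ <= 13/2 * r.
  have a0 : 0 < a by lra.
  rewrite -(ler_pM2l a0); lra.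
lra.
Qed.

Lemma part2 : 1 <= n%:R * rho Q ->
  1 - expR (- n%:R) <=
    bern_P Q (fun A => cut_norm (A - Q) <= 15 * Num.sqrt (rho Q / n%:R)).
Proof.
have [a2 r0 rE UE] := basics.
set a := n%:R : R in a2 rE UE *.
set r := Num.sqrt (rho Q / a) in r0 rE UE *.
move=> h1.
rewrite P_compl.
have har : 1 <= a * r.
  rewrite rE in h1.
  have : 1 <= (a * r) ^+ 2 by rewrite exprMn expr2 -mulrA.
  have : 0 <= a * r by apply: mulr_ge0; lra.
  rewrite expr2; nra.
have rpos : 0 < r by nra.
set l := (4 * a * r)^-1.
have l0 : 0 <= l <= 1/4.
  have hl : l * (4 * a * r) = 1 by rewrite /l mulVf //; apply/eqP; nra.
  apply/andP; split; first by rewrite /l invr_ge0; nra.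
  nra.
set mu := l * n%:R ^+ 2.
have mu0 : 0 <= mu by rewrite /mu; apply: mulr_ge0; [case/andP: l0 | apply: exprn_ge0; lra].
have hm := markov (fun w => cut_norm (bern_mx R w - Q)) mu (15 * r) mu0.
suff : \sum_w W w * expR (mu * (cut_norm (bern_mx R w - Q) - 15 * r)) <= expR (- a).
  move=> h2; have := le_trans hm h2; rewrite -/a -/r; lra.
have -> : \sum_w W w * expR (mu * (cut_norm (bern_mx R w - Q) - 15 * r))
   = expR (- (mu * (15 * r))) * \sum_w W w * expR (mu * cut_norm (bern_mx R w - Q)).
  rewrite mulr_sumr; apply: eq_bigr => w _.
  rewrite mulrBr -[_ - _]/(_ + - _) expRD; ring.
have := E_exp l l0; rewrite -/mu => h3.
apply: le_trans (ler_wpM2l (expR_ge0 _) h3) _.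
rewrite -!expRD ler_expR.
have e1 : mu * (15 * r) = 15 / 4 * a by rewrite /mu -/a /l; field; apply/andP; split; apply/eqP; lra.
have e2 : 8 * l ^+ 2 * U = a / 4 by rewrite UE /l; field; apply/andP; split; apply/eqP; lra.
rewrite e1 e2 -/a; lra.
Qed.
End Main.

Theorem lemmaB3 (R : realType) (n : nat) (Q : 'M[R]_n)
  (hn : (2 <= n)%N)
  (hsym : Q^T = Q)
  (hrange : forall i j, 0 <= Q i j <= 1)
  (hdiag : forall i, Q i i = 0) :
  bern_E Q (fun A => cut_norm (A - Q)) <= 16 * Num.sqrt (rho Q / n%:R)
  /\
  (1 <= n%:R * rho Q ->
     1 - expR (- n%:R) <=
       bern_P Q (fun A => cut_norm (A - Q) <= 15 * Num.sqrt (rho Q / n%:R))).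
Proof.
split.
- exact: (@part1 R n Q hsym hrange hdiag hn).
- exact: (@part2 R n Q hsym hrange hdiag hn).
Qed.
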